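(* Let $p>3$ be prime, $t\in\{1,3,p,3p\}$, and $1\le r\le 3p-1$ with $\gcd(r,3p)=1$. Then \[\mathcal{S}(3,r,t)=\begin{cases}3(|r|_p-1) & \text{if } r\equiv1\pmod3\text{ and } t\in\{3,3p\},\\ 3(|r|_p-1) & \text{if } r\equiv 1\pmod 3,\ t\in\{1,p\}\text{ and } 3\nmid|r|_p,\\ |r|_p-3 & \text{if } r\equiv 1\pmod 3,\ t\in\{1,p\}\text{ and } 3\mid |r|_p,\\ 3(|r|_p-1) & \text{if } r\equiv 2\pmod 3\text{ and } |r|_p\text{ is odd},\\ 3\left(\frac{|r|_p}{2}-1\right) & \text{if } r\equiv 2\pmod 3\text{ and }|r|_p\text{ is even}.\end{cases}\]
   Context: $|r|_m$ is the multiplicative order of $r$ modulo $m$ (with $|r|_1=1$). $S_k(x):=1+x+\cdots+x^{k-1}$, $S_0:=0$. For $m\ge1$ with $\gcd(r,m)=1$, $\kappa(m,r,t):=\dfrac{m|r|_m}{\gcd(m,\,tS_{|r|_m}(r))}$. For $d\in\{1,3,p,3p\}$, $\Lambda(d,r,t):=\{\ell>0:\ \ell \text{ divides } \frac{|r|_{3p}}{\gcd(\kappa(d,r,t),|r|_{3p})}\text{ and }\gcd(r^{\ell\kappa(d,r,t)}-1,3p)=d\}$, and $\mathcal{S}(d,r,t):=\sum_{\ell\in\Lambda(d,r,t)} d\,\phi\!\left(\frac{|r|_{3p}}{\ell\gcd(\kappa(d,r,t),|r|_{3p})}\right)$, with $\phi$ Euler's function. *)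

(* Defs.v *)
From mathcomp Require Import all_boot all_order all_algebra.
Set Implicit Arguments. Unset Strict Implicit. Unset Printing Implicit Defensive.

(* For m = 1 this gives 1.  When coprime r m and m >= 1 the
   order is at most m, so searching k in 1..m suffices (the value for
   non-coprime r is irrelevant). *)
Definition ordm (m r : nat) : nat :=
  (find (fun k => r ^ k.+1 == 1 %[mod m]) (iota 0 m)).+1.

Definition Sgeom (k x : nat) : nat := \sum_(i < k) x ^ i.

Definition kappa (m r t : nat) : nat :=
  m * ordm m r %/ gcdn m (t * Sgeom (ordm m r) r).

Definition Lambda (p d r t : nat) : seq nat :=
  let N := ordm (3 * p) r in
  let k := kappa d r t in
  [seq l <- divisors (N %/ gcdn k N) | gcdn (r ^ (l * k) - 1) (3 * p) == d].

Definition Ssum (p d r t : nat) : nat :=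
  let N := ordm (3 * p) r in
  let k := kappa d r t in
  \sum_(l <- Lambda p d r t) d * totient (N %/ (l * gcdn k N)).

(* Main.v *)
Require Import Defs.
From mathcomp Require Import all_boot all_order all_algebra all_fingroup all_solvable.
From mathcomp Require Import zify.
Import GRing.Theory Num.Theory.
Set Implicit Arguments. Unset Strict Implicit. Unset Printing Implicit Defensive.
Lemma totient_le n : totient n <= n.
Proof.
rewrite totient_count_coprime.
apply: (@leq_trans (\sum_(0 <= d < n) 1)).
  by apply: leq_sum => i _; exact: leq_b1.
by rewrite sum_nat_const_nat muln1 subn0.
Qed.

Lemma ordm_spec m r : 0 < m -> coprime r m ->
  [/\ 0 < ordm m r, r ^ ordm m r == 1 %[mod m] &
      forall j, 0 < j < ordm m r -> ~~ (r ^ j == 1 %[mod m])].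
Proof.
move=> m0 co.
set a := (fun k => r ^ k.+1 == 1 %[mod m]).
have hs : has a (iota 0 m).
  apply/hasP; exists (totient m).-1.
    rewrite mem_iota /= add0n.
    have := totient_le m; have := totient_gt0 m; rewrite m0; lia.
  rewrite /a prednK ?totient_gt0 //; apply/eqP; exact: Euler_exp_totient.
have hf := hs; rewrite has_find size_iota in hf.
split => //.
- have := nth_find 0 hs; rewrite nth_iota // add0n.
- move=> j /andP[j0 jk].
  have hj : j.-1 < find a (iota 0 m).
    move: jk; rewrite /ordm -/a. lia.
  have := @before_find _ 0 a (iota 0 m) j.-1 hj.
  rewrite nth_iota; last by lia.
  by rewrite add0n /a prednK // => ->.
Qed.

Lemma ordm_modE m r n : 0 < m -> coprime r m ->
  r ^ n = r ^ (n %% ordm m r) %[mod m].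
Proof.
move=> m0 co; have [k0 hk _] := ordm_spec m0 co.
rewrite {1}(divn_eq n (ordm m r)) expnD [_ * ordm m r]mulnC expnM -modnMml -modnXm.
by rewrite (eqP hk) modnXm exp1n modnMml mul1n.
Qed.

Lemma ordP m r n : 0 < m -> coprime r m ->
  (r ^ n == 1 %[mod m]) = (ordm m r %| n).
Proof.
move=> m0 co; have [k0 hk hmin] := ordm_spec m0 co.
rewrite (ordm_modE n m0 co) /dvdn.
case: (posnP (n %% ordm m r)) => [-> | h]; first by rewrite expn0 eqxx.
have := hmin (n %% ordm m r); rewrite h ltn_pmod //= => /(_ isT) /negbTE ->.
by [].
Qed.

Lemma ordm_unique m r k : 0 < m -> coprime r m ->
  (forall n, (r ^ n == 1 %[mod m]) = (k %| n)) -> ordm m r = k.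
Proof.
move=> m0 co h; apply/eqP; rewrite eqn_dvd.
have h1 := h k; rewrite dvdnn in h1.
have h2 := h (ordm m r); rewrite (ordP _ m0 co) dvdnn in h2.
by rewrite -(ordP _ m0 co) h1 -h2.
Qed.

Lemma sum_totient_div n : 0 < n -> \sum_(d <- divisors n) totient d = n.
Proof.
move=> n0.
transitivity (\sum_(d < n.+1 | d %| n) totient d); last exact: sum_totient_dvd.
rewrite -(big_mkord (fun d => d %| n) totient) -[RHS]big_filter; apply: perm_big; apply: uniq_perm.
- exact: divisors_uniq.
- by rewrite filter_uniq // iota_uniq.
move=> d; rewrite mem_filter mem_index_iota -dvdn_divisors //.
case hd: (d %| n) => //=; rewrite ltnS dvdn_leq //.
Qed.

Lemma sum_totient_div_rev n : 0 < n -> \sum_(d <- divisors n) totient (n %/ d) = n.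
Proof.
move=> n0.
transitivity (\sum_(d <- [seq n %/ d | d <- divisors n]) totient d).
  by rewrite big_map.
rewrite -[RHS](sum_totient_div n0); apply: perm_big; apply: uniq_perm.
- rewrite map_inj_in_uniq ?divisors_uniq // => a b.
  rewrite -!dvdn_divisors // => ha hb e.
  by rewrite -(mulKn a n0) -(mulKn b n0) -!divnA // e.
- exact: divisors_uniq.
move=> d; apply/mapP/idP.
- case=> e; rewrite -!dvdn_divisors // => he ->; exact: dvdn_div.
rewrite -dvdn_divisors // => hd; exists (n %/ d).
  by rewrite -dvdn_divisors // dvdn_div.
by rewrite divnA // mulKn.
Qed.

Lemma key_sum M : 0 < M ->
  \sum_(l <- [seq l <- divisors M | l != M]) 3 * totient (M %/ l) = 3 * (M - 1).
Proof.
move=> M0; rewrite big_filter.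
have h : \sum_(l <- divisors M) 3 * totient (M %/ l) = 3 * totient (M %/ M)
   + \sum_(l <- divisors M | l != M) 3 * totient (M %/ l).
  by apply: bigD1_seq; [exact: divisors_id | exact: divisors_uniq].
move: h; rewrite -big_distrr /= sum_totient_div_rev // divnn M0 /= => h.
have : totient 1 = 1 by [].
lia.
Qed.

Lemma cop3p p : prime p -> 3 < p -> coprime 3 p.
Proof.
move=> pp p3; rewrite prime_coprime // dvdn_prime2 //; apply/eqP; lia.
Qed.

Lemma gcd3p p a : prime p -> 3 < p ->
  (gcdn a (3 * p) == 3) = (3 %| a) && ~~ (p %| a).
Proof.
move=> pp p3; apply/idP/idP.
- move/eqP=> h; have h3 : 3 %| a by rewrite -h dvdn_gcdl.
  rewrite h3 /=; apply/negP=> hp.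
  have : p %| gcdn a (3 * p) by rewrite dvdn_gcd hp dvdn_mull.
  rewrite h => /dvdn_leq; lia.
- case/andP=> h3 hp.
  have cap : coprime a p by rewrite coprime_sym prime_coprime.
  by rewrite mulnC Gauss_gcdr //; apply/eqP/gcdn_idPr.
Qed.

Lemma lambda_pred p r n : prime p -> 3 < p -> 0 < r -> coprime r (3 * p) ->
  (gcdn (r ^ n - 1) (3 * p) == 3) = (ordm 3 r %| n) && ~~ (ordm p r %| n).
Proof.
move=> pp p3 r0 co; rewrite coprimeMr in co; case/andP: co => c3 cp.
have x1 : 1 <= r ^ n by rewrite expn_gt0 r0.
rewrite gcd3p // -!eqn_mod_dvd // !ordP //; exact: prime_gt0.
Qed.

Lemma ordm3p p r : prime p -> 3 < p -> coprime r (3 * p) -> forall n,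
  (ordm (3 * p) r %| n) = (ordm 3 r %| n) && (ordm p r %| n).
Proof.
move=> pp p3 co n; have co' := co; rewrite coprimeMr in co'; case/andP: co' => c3 cp.
have p0 := prime_gt0 pp.
rewrite -!ordP // ?muln_gt0 ?p0 //; exact: (chinese_remainder (cop3p pp p3)).
Qed.

Lemma ord3_1 r : r %% 3 = 1 -> ordm 3 r = 1.
Proof. by move=> h; rewrite /ordm /= expn1 h. Qed.

Lemma ord3_2 r : r %% 3 = 2 -> ordm 3 r = 2.
Proof.
move=> h; rewrite /ordm /= expn1 h /=.
by rewrite -modnXm h.
Qed.

Lemma Sgeom1 r : Sgeom 1 r = 1.
Proof. by rewrite /Sgeom big_ord1 expn0. Qed.

Lemma Sgeom2 r : Sgeom 2 r = 1 + r.
Proof. by rewrite /Sgeom !big_ord_recl big_ord0 /= expn0 expn1 addn0. Qed.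

Lemma Ssum_gen p r t M :
  M = ordm (3 * p) r %/ gcdn (kappa 3 r t) (ordm (3 * p) r) ->
  (forall l, l %| M ->
    (gcdn (r ^ (l * kappa 3 r t) - 1) (3 * p) == 3) = (l != M)) ->
  Ssum p 3 r t = 3 * (M - 1).
Proof.
set N := ordm (3 * p) r; set k := kappa 3 r t => hM hl.
have N0 : 0 < N by [].
have g0 : 0 < gcdn k N by rewrite gcdn_gt0 N0 orbT.
have M0 : 0 < M by rewrite hM divn_gt0 // dvdn_leq // dvdn_gcdr.
rewrite -(key_sum M0) /Ssum /Lambda /=.
subst M.
rewrite (@eq_in_filter _ _ (fun l => l != N %/ gcdn k N)); last first.
  by move=> l; rewrite -dvdn_divisors // => /hl ->.
apply: eq_bigr => l _.
by rewrite [l * _]mulnC divnMA.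
Qed.

Lemma ndvd_eq M l : 0 < M -> l %| M -> ~~ (M %| l) = (l != M).
Proof. by move=> M0 hl; rewrite eqn_dvd hl. Qed.

Lemma main_nat p t r : prime p -> 3 < p -> t \in [:: 1; 3; p; 3 * p] ->
  0 < r -> coprime r (3 * p) ->
  let o := ordm p r in
  [/\ r %% 3 = 1 -> t \in [:: 3; 3 * p] -> Ssum p 3 r t = 3 * (o - 1),
      r %% 3 = 1 -> t \in [:: 1; p] -> ~~ (3 %| o) -> Ssum p 3 r t = 3 * (o - 1),
      r %% 3 = 1 -> t \in [:: 1; p] -> 3 %| o -> Ssum p 3 r t = 3 * (o %/ 3 - 1),
      r %% 3 = 2 -> odd o -> Ssum p 3 r t = 3 * (o - 1)
    & r %% 3 = 2 -> ~~ odd o -> Ssum p 3 r t = 3 * (o %/ 2 - 1)].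
Proof.
move=> pp p3 ht r0 co o.
have p0 := prime_gt0 pp.
have co' := co; rewrite coprimeMr in co'; case/andP: co' => c3 cp.
have o0 : 0 < o by [].
have m0 : 0 < 3 * p by rewrite muln_gt0 p0.
have hk1 : r %% 3 = 1 -> t \in [:: 3; 3 * p] -> kappa 3 r t = 1.
  move=> h; rewrite /kappa ord3_1 // Sgeom1 !muln1 !inE => /orP[/eqP-> | /eqP->] //.
  by rewrite gcdnMr.
have hk3 : r %% 3 = 1 -> t \in [:: 1; p] -> kappa 3 r t = 3.
  move=> h; rewrite /kappa ord3_1 // Sgeom1 !muln1 !inE => /orP[/eqP-> | /eqP->] //.
  by rewrite (eqP (cop3p pp p3)).
have hk2 : r %% 3 = 2 -> kappa 3 r t = 2.
  move=> h; rewrite /kappa ord3_2 // Sgeom2.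
  have : 3 %| t * (1 + r).
    apply: dvdn_mull; rewrite /dvdn -modnDmr h //.
  by move/gcdn_idPl => ->.
have hN1 : r %% 3 = 1 -> ordm (3 * p) r = o.
  move=> h; apply: (ordm_unique m0 co) => n.
  by rewrite ordP // ordm3p // ord3_1 // dvd1n.
have hN2 : r %% 3 = 2 -> forall n, (ordm (3 * p) r %| n) = (2 %| n) && (o %| n).
  by move=> h n; rewrite ordm3p // ord3_2.
split.
- move=> h1 htt; apply: Ssum_gen.
    by rewrite hk1 // hN1 // gcd1n divn1.
  move=> l hl; rewrite hk1 // muln1 lambda_pred // ord3_1 // dvd1n /=.
  exact: ndvd_eq.
- move=> h1 htt h3; have c3o : coprime 3 o by rewrite prime_coprime.
  apply: Ssum_gen.
    by rewrite hk3 // hN1 // (eqP c3o) divn1.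
  move=> l hl; rewrite hk3 // lambda_pred // ord3_1 // dvd1n /=.
  rewrite Gauss_dvdl ?(coprime_sym o 3) //; exact: ndvd_eq.
- move=> h1 htt h3.
  have ho : o %/ 3 * 3 = o by rewrite divnK.
  have M0 : 0 < o %/ 3 by rewrite divn_gt0 // dvdn_leq.
  apply: Ssum_gen.
    by rewrite hk3 // hN1 // (gcdn_idPl h3).
  move=> l hl; rewrite hk3 // lambda_pred // ord3_1 // dvd1n /=.
  rewrite -/o -{1}ho dvdn_pmul2r //; exact: ndvd_eq.
- move=> h2 hodd.
  have hN : ordm (3 * p) r = 2 * o.
    apply: (ordm_unique m0 co) => n.
    by rewrite ordP // hN2 // Gauss_dvd // coprime2n.
  apply: Ssum_gen.
    by rewrite hk2 // hN gcdnMr mulKn.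
  move=> l hl; rewrite hk2 // lambda_pred // ord3_2 // dvdn_mull //=.
  rewrite Gauss_dvdl ?coprimen2 //; exact: ndvd_eq.
- move=> h2 hev.
  have h2o : 2 %| o by rewrite dvdn2.
  have hN : ordm (3 * p) r = o.
    apply: (ordm_unique m0 co) => n.
    rewrite ordP // hN2 //; apply/andP/idP => [[]//|ho]; split => //.
    exact: dvdn_trans ho.
  have ho : o %/ 2 * 2 = o by rewrite divnK.
  have M0 : 0 < o %/ 2 by rewrite divn_gt0 // dvdn_leq.
  apply: Ssum_gen.
    by rewrite hk2 // hN (gcdn_idPl h2o).
  move=> l hl; rewrite hk2 // lambda_pred // ord3_2 // dvdn_mull //=.
  rewrite -/o -{1}ho dvdn_pmul2r //; exact: ndvd_eq.
Qed.

Local Open Scope ring_scope.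

Theorem lemma5p9 (p t r : nat) :
  prime p -> (3 < p)%N -> t \in [:: 1; 3; p; 3 * p]%N ->
  (1 <= r <= 3 * p - 1)%N -> coprime r (3 * p) ->
  let o := ordm p r in
  let S := (Ssum p 3 r t)%:Z in
  [/\ (r %% 3 = 1)%N -> t \in [:: 3; 3 * p]%N -> S = 3 * (o%:Z - 1),
      (r %% 3 = 1)%N -> t \in [:: 1; p]%N -> ~~ (3 %| o)%N -> S = 3 * (o%:Z - 1),
      (r %% 3 = 1)%N -> t \in [:: 1; p]%N -> (3 %| o)%N -> S = o%:Z - 3,
      (r %% 3 = 2)%N -> odd o -> S = 3 * (o%:Z - 1)
    & (r %% 3 = 2)%N -> ~~ odd o -> S = 3 * ((o %/ 2)%N%:Z - 1)].
Proof.
move=> pp p3 ht /andP[r1 _] co o S.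
have [h1 h2 h3 h4 h5] := main_nat pp p3 ht r1 co.
have o0 : (0 < o)%N by [].
rewrite /S /o in o0 *; move: (ordm p r) o0 h1 h2 h3 h4 h5.
clear; move=> o o0 h1 h2 h3 h4 h5; split.
- by move=> a b; rewrite h1 //; lia.
- by move=> a b c; rewrite h2 //; lia.
- move=> a b c; rewrite h3 //.
  have ho : (o %/ 3 * 3)%N = o by rewrite divnK.
  lia.
- by move=> a b; rewrite h4 //; lia.
- move=> a b; rewrite h5 //.
  have : (2 %| o)%N by rewrite dvdn2.
  have ho : (o %/ 2 * 2)%N = o by rewrite divnK // dvdn2.
  lia.
Qed.
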